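(* Let $\pi_1,\pi_2$ be two policies with the same information set $\mathcal{I}$ in a finite-horizon POMDP $\mathcal{M}$, and let $j\in\{\mathcal{S},\mathcal{O}\}$. Let $\mathcal{T}_j(\pi_1,\pi_2)$ be the set of length-$T$ trajectories $\tau_j$ (over states if $j=\mathcal{S}$, over observations if $j=\mathcal{O}$) that have positive probability under $p^{\pi_1}$ or under $p^{\pi_2}$, and let $\tau_j^\star\in\arg\max_{\tau\in\mathcal{T}_j(\pi_1,\pi_2)}H(d(\tau))$. Then $$\big|J^{j}(\pi_1)-J^{j}(\pi_2)\big|\le T\,H(d(\tau_j^\star))\,d^{TV}(\pi_1,\pi_2),$$ where $d^{TV}(\pi_1,\pi_2):=\sup_{i\in\mathcal{I}}d^{TV}\big(\pi_1(\cdot\mid i),\pi_2(\cdot\mid i)\big)$.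
   Context: A finite-horizon POMDP $\mathcal{M}=(\mathcal{S},\mathcal{A},\mathcal{O},\mathbb{P},\mathbb{O},T,\mu)$ has finite state, action and observation sets, transition kernel $\mathbb{P}(s'\mid s,a)$, observation kernel $\mathbb{O}(o\mid s)$, horizon $T$, initial distribution $\mu$. Under a policy $\pi:\mathcal{I}\to\Delta(\mathcal{A})$: $s_1\sim\mu$, $o_t\sim\mathbb{O}(\cdot\mid s_t)$ for $t\le T$, and for $t<T$, $a_t\sim\pi(\cdot\mid i_t)$, $s_{t+1}\sim\mathbb{P}(\cdot\mid s_t,a_t)$, where $i_t$ is a deterministic function of the history $(o_1,a_1,\dots,a_{t-1},o_t)$. $p^\pi$ is the law of the joint trajectory, with state trajectory $\tau_{\mathcal{S}}=(s_1,\dots,s_T)$ and observation trajectory $\tau_{\mathcal{O}}=(o_1,\dots,o_T)$. For a sequence $x=(x_1,\dots,x_T)$ over a finite set, $d(x)$ is its empirical distribution $d_y(x)=\frac1T\sum_t\mathbf{1}\{x_t=y\}$ and $H$ is Shannon entropy (natural log). Objectives: $J^{\mathcal{S}}(\pi)=\mathbb{E}_{p^\pi}[H(d(\tau_{\mathcal{S}}))]$ (Maximum State Entropy) and $J^{\mathcal{O}}(\pi)=\mathbb{E}_{p^\pi}[H(d(\tau_{\mathcal{O}}))]$ (Maximum Observation Entropy). $d^{TV}(p,q)=\frac12\sum_x|p(x)-q(x)|$ is total variation distance. *)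

(* Defs.v *)
From mathcomp Require Import all_boot all_order all_algebra.
From mathcomp Require Import reals exp.
Set Implicit Arguments. Unset Strict Implicit. Unset Printing Implicit Defensive.
Import Order.TTheory GRing.Theory Num.Theory.
Local Open Scope ring_scope.

(* Horizon T = n.+1 (T >= 1).  Time t (0-indexed) ranges over 'I_n.+1 for
   states/observations and over 'I_n for actions (actions a_1..a_{T-1}). *)

Definition is_dist (R : realType) (Y : finType) (p : Y -> R) : Prop :=
  (forall y, 0 <= p y) /\ \sum_(y : Y) p y = 1.

(* Shannon entropy, natural log (0 * ln 0 = 0) *)
Definition entropy (R : realType) (Y : finType) (p : Y -> R) : R :=
  - \sum_(y : Y) p y * ln (p y).

Definition empirical (R : realType) (Y : finType) (n : nat)
    (x : {ffun 'I_n.+1 -> Y}) : Y -> R :=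
  fun y => #|[set t | x t == y]|%:R / n.+1%:R.

Definition tv (R : realType) (Y : finType) (p q : Y -> R) : R :=
  2^-1 * \sum_(y : Y) `|p y - q y|.

Definition policy_tv (R : realType) (I A : finType) (pi1 pi2 : I -> A -> R) : R :=
  \big[Num.max/0]_(i : I) tv (pi1 i) (pi2 i).

(* history at action time t : (o_1,a_1,...,o_{t-1},a_{t-1}) together with o_t *)
Definition history (O A : finType) (n : nat) (o : {ffun 'I_n.+1 -> O})
    (a : {ffun 'I_n -> A}) (t : 'I_n) : seq (O * A) * O :=
  ([seq (o (widen_ord (leqnSn n) k), a k) | k : 'I_n <- [seq k : 'I_n <- enum 'I_n | (k < t)%N]],
   o (widen_ord (leqnSn n) t)).

(* probability p^pi of a joint trajectory (s, o, a).  The information state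
   is i_t = info (history), a deterministic function of the history. *)
Definition traj_prob (R : realType) (S A O I : finType) (n : nat)
    (mu : S -> R) (P : S -> A -> S -> R) (Obs : S -> O -> R)
    (info : seq (O * A) -> O -> I) (pi : I -> A -> R)
    (s : {ffun 'I_n.+1 -> S}) (o : {ffun 'I_n.+1 -> O}) (a : {ffun 'I_n -> A}) : R :=
  mu (s ord0) * (\prod_(t : 'I_n.+1) Obs (s t) (o t)) *
  \prod_(t : 'I_n)
     (pi (info (history o a t).1 (history o a t).2) (a t) *
      P (s (widen_ord (leqnSn n) t)) (a t) (s (lift ord0 t))).

Definition state_marg (R : realType) (S A O I : finType) (n : nat)
    mu P Obs info (pi : I -> A -> R) (s : {ffun 'I_n.+1 -> S}) : R :=
  \sum_(o : {ffun 'I_n.+1 -> O}) \sum_(a : {ffun 'I_n -> A})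
     traj_prob (R:=R) mu P Obs info pi s o a.

Definition obs_marg (R : realType) (S A O I : finType) (n : nat)
    mu P Obs info (pi : I -> A -> R) (o : {ffun 'I_n.+1 -> O}) : R :=
  \sum_(s : {ffun 'I_n.+1 -> S}) \sum_(a : {ffun 'I_n -> A})
     traj_prob (R:=R) mu P Obs info pi s o a.

Definition J_state (R : realType) (S A O I : finType) (n : nat)
    mu P Obs info (pi : I -> A -> R) : R :=
  \sum_(s : {ffun 'I_n.+1 -> S}) \sum_(o : {ffun 'I_n.+1 -> O})
  \sum_(a : {ffun 'I_n -> A})
     traj_prob (R:=R) mu P Obs info pi s o a * entropy (empirical R s).

Definition J_obs (R : realType) (S A O I : finType) (n : nat)
    mu P Obs info (pi : I -> A -> R) : R :=
  \sum_(s : {ffun 'I_n.+1 -> S}) \sum_(o : {ffun 'I_n.+1 -> O})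
  \sum_(a : {ffun 'I_n -> A})
     traj_prob (R:=R) mu P Obs info pi s o a * entropy (empirical R o).

(* Main.v *)
Require Import Defs.
From mathcomp Require Import all_boot all_order all_algebra.
From mathcomp Require Import reals exp ring lra.
Set Implicit Arguments. Unset Strict Implicit. Unset Printing Implicit Defensive.
Import Order.TTheory GRing.Theory Num.Theory.
Local Open Scope ring_scope.

Definition ext (X : finType) (m : nat) (f : {ffun 'I_m -> X}) (x : X)
  : {ffun 'I_m.+1 -> X} :=
  [ffun i => if unlift ord_max i is Some j then f j else x].

Lemma ext_val (X : finType) (m : nat) (f : {ffun 'I_m -> X}) (x : X)
  (i : 'I_m.+1) (j : 'I_m) : val i = val j -> ext f x i = f j.
Proof.
move=> h; have -> : i = lift ord_max j.
  by apply/val_inj; rewrite h /= /bump leqNgt ltn_ord.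
by rewrite ffunE liftK.
Qed.

Arguments ext_val [X m f x] i j _.

Lemma ext_max (X : finType) (m : nat) (f : {ffun 'I_m -> X}) (x : X) :
  ext f x ord_max = x.
Proof. by rewrite ffunE unlift_none. Qed.

Lemma sum_ext (R : realType) (X : finType) (m : nat) (G : {ffun 'I_m.+1 -> X} -> R) :
  \sum_(F : {ffun 'I_m.+1 -> X}) G F =
  \sum_(f : {ffun 'I_m -> X}) \sum_(x : X) G (ext f x).
Proof.
rewrite pair_big /=.
rewrite (reindex (fun p : {ffun 'I_m -> X} * X => ext p.1 p.2)) //=.
exists (fun F => ([ffun j => F (widen_ord (leqnSn m) j)], F ord_max)).
- move=> [f x] _ /=; rewrite ext_max; congr pair.
  by apply/ffunP => j; rewrite ffunE (ext_val _ j).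
- move=> F _ /=; apply/ffunP => i; rewrite /ext ffunE.
  case: (unliftP ord_max i) => [j ->|->] //.
  rewrite ffunE; congr (F _); apply/val_inj; by rewrite /= /bump leqNgt ltn_ord.
Qed.

Lemma sum_ffun0 (R : realType) (X : finType) (c : R) :
  \sum_(f : {ffun 'I_0 -> X}) c = c.
Proof. by rewrite sumr_const card_ffun card_ord expn0. Qed.

Lemma hist_widen (O A : finType) (n : nat) (o : {ffun 'I_n.+1 -> O})
  (a : {ffun 'I_n -> A}) (y : O) (z : A) (t : 'I_n) :
  history (ext o y) (ext a z) (widen_ord (leqnSn n) t) = history o a t.
Proof.
rewrite /history; congr pair; last by apply: ext_val.
rewrite enum_ordSr filter_rcons.
have -> : (nat_of_ord (@ord_max n) < widen_ord (leqnSn n) t)%N = false.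
  by apply/negbTE; rewrite -leqNgt /= ltnW.
rewrite filter_map -map_comp; apply: eq_map => k /=.
by rewrite (ext_val _ (widen_ord (leqnSn n) k)) // (ext_val _ k).
Qed.

Definition lasthist (O A : finType) (n : nat) (o : {ffun 'I_n.+1 -> O})
  (a : {ffun 'I_n -> A}) : seq (O * A) * O :=
  ([seq (o (widen_ord (leqnSn n) k), a k) | k <- enum 'I_n], o ord_max).

Lemma hist_max (O A : finType) (n : nat) (o : {ffun 'I_n.+1 -> O})
  (a : {ffun 'I_n -> A}) (y : O) (z : A) :
  history (ext o y) (ext a z) ord_max = lasthist o a.
Proof.
rewrite /history /lasthist; congr pair; last by apply: ext_val.
rewrite enum_ordSr filter_rcons /= ltnn filter_map -map_comp.
have -> : [seq i <- enum 'I_n | preim (widen_ord (leqnSn n)) 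
    (fun k : 'I_n.+1 => (k < n)%N) i] = enum 'I_n.
  by apply/all_filterP/allP => k _ /=.
apply: eq_map => k /=.
by rewrite (ext_val _ (widen_ord (leqnSn n) k)) // (ext_val _ k).
Qed.

Lemma traj_ext (R : realType) (S A O I : finType) (n : nat)
    (mu : S -> R) (P : S -> A -> S -> R) (Obs : S -> O -> R)
    (info : seq (O * A) -> O -> I) (w : I -> A -> R)
    (s : {ffun 'I_n.+1 -> S}) (o : {ffun 'I_n.+1 -> O}) (a : {ffun 'I_n -> A})
    (x : S) (y : O) (z : A) :
  traj_prob mu P Obs info w (ext s x) (ext o y) (ext a z) =
  traj_prob mu P Obs info w s o a * Obs x y *
  (w (info (lasthist o a).1 (lasthist o a).2) z * P (s ord_max) z x).
Proof.
rewrite /traj_prob.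
rewrite [\prod_(t < n.+2) _]big_ord_recr [\prod_(t < n.+1) (w _ _ * _)]big_ord_recr.
rewrite !ext_max hist_max.
rewrite (ext_val (ord0 : 'I_n.+2) (ord0 : 'I_n.+1)) //.
rewrite (ext_val (widen_ord _ ord_max) ord_max) //.
have -> : ext s x (lift ord0 ord_max) = x.
  have -> : (lift ord0 (@ord_max n)) = ord_max by apply/val_inj.
  by rewrite ext_max.
have -> : \prod_(i < n.+1) Obs (ext s x (widen_ord (leqnSn n.+1) i))
      (ext o y (widen_ord (leqnSn n.+1) i)) = \prod_(i < n.+1) Obs (s i) (o i).
  by apply: eq_bigr => i _; rewrite (ext_val _ i) // (ext_val _ i).
have -> : \prod_(i < n) (w (info (history (ext o y) (ext a z) (widen_ord (leqnSn n) i)).1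
        (history (ext o y) (ext a z) (widen_ord (leqnSn n) i)).2)
        (ext a z (widen_ord (leqnSn n) i)) *
     P (ext s x (widen_ord (leqnSn n.+1) (widen_ord (leqnSn n) i)))
       (ext a z (widen_ord (leqnSn n) i))
       (ext s x (lift ord0 (widen_ord (leqnSn n) i)))) =
  \prod_(t < n) (w (info (history o a t).1 (history o a t).2) (a t) *
      P (s (widen_ord (leqnSn n) t)) (a t) (s (lift ord0 t))).
  apply: eq_bigr => t _; rewrite hist_widen (ext_val _ t) //.
  rewrite (ext_val _ (widen_ord (leqnSn n) t)) //.
  by rewrite (ext_val _ (lift ord0 t)) //= !lift0.
rewrite /=; ring.
Qed.

Definition mass (R : realType) (S A O I : finType) (n : nat)
    (mu : S -> R) (P : S -> A -> S -> R) (Obs : S -> O -> R)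
    (info : seq (O * A) -> O -> I) (w : I -> A -> R) : R :=
  \sum_(s : {ffun 'I_n.+1 -> S}) \sum_(o : {ffun 'I_n.+1 -> O})
  \sum_(a : {ffun 'I_n -> A}) traj_prob mu P Obs info w s o a.

Lemma mass_step (R : realType) (S A O I : finType) (n : nat)
    (mu : S -> R) (P : S -> A -> S -> R) (Obs : S -> O -> R)
    (info : seq (O * A) -> O -> I) (w : I -> A -> R) :
  (forall s a, is_dist (P s a)) ->
  (forall s, is_dist (Obs s)) ->
  mass n.+1 mu P Obs info w =
  \sum_(s : {ffun 'I_n.+1 -> S}) \sum_(o : {ffun 'I_n.+1 -> O})
  \sum_(a : {ffun 'I_n -> A}) traj_prob mu P Obs info w s o a *
    \sum_(z : A) w (info (lasthist o a).1 (lasthist o a).2) z.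
Proof.
move=> hP hO.
rewrite /mass sum_ext; apply: eq_bigr => s _.
under eq_bigr => x _ do rewrite sum_ext.
rewrite exchange_big; apply: eq_bigr => o _.
under eq_bigr => x _ do under eq_bigr => y _ do rewrite sum_ext.
under eq_bigr => x _ do under eq_bigr => y _ do under eq_bigr => a _ do
  under eq_bigr => z _ do rewrite traj_ext.
under eq_bigr => x _ do rewrite exchange_big.
rewrite exchange_big; apply: eq_bigr => a _.
set T := traj_prob _ _ _ _ _ _ _ _.
set L := info _ _.
transitivity (\sum_(x : S) \sum_(z : A) T * (w L z * P (s ord_max) z x)).
  apply: eq_bigr => x _.
  rewrite exchange_big; apply: eq_bigr => z _.
  rewrite -mulr_suml -mulr_sumr (proj2 (hO x)); ring.
rewrite exchange_big mulr_sumr; apply: eq_bigr => z _.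
by rewrite -mulr_sumr -mulr_sumr (proj2 (hP _ _)) mulr1.
Qed.

Lemma mass0 (R : realType) (S A O I : finType)
    (mu : S -> R) (P : S -> A -> S -> R) (Obs : S -> O -> R)
    (info : seq (O * A) -> O -> I) (w : I -> A -> R) :
  is_dist mu -> (forall s, is_dist (Obs s)) ->
  mass 0 mu P Obs info w = 1.
Proof.
move=> hmu hO; rewrite /mass sum_ext.
under eq_bigr => f _ do under eq_bigr => x _ do rewrite sum_ext.
transitivity (\sum_(f : {ffun 'I_0 -> S}) \sum_(x : S)
               \sum_(g : {ffun 'I_0 -> O}) \sum_(y : O) mu x * Obs x y).
  apply: eq_bigr => f _; apply: eq_bigr => x _; apply: eq_bigr => g _.
  apply: eq_bigr => y _.
  rewrite /traj_prob; under eq_bigr => b _ do rewrite big_ord1 big_ord0 mulr1.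
  rewrite sumr_const card_ffun card_ord expn0 mulr1n.
  have -> : (ord0 : 'I_1) = ord_max by apply/val_inj.
  by rewrite !ext_max.
rewrite sum_ffun0 -(proj2 hmu); apply: eq_bigr => x _.
by rewrite sum_ffun0 -mulr_sumr (proj2 (hO x)) mulr1.
Qed.

Lemma traj_ge0 (R : realType) (S A O I : finType) (n : nat)
    (mu : S -> R) (P : S -> A -> S -> R) (Obs : S -> O -> R)
    (info : seq (O * A) -> O -> I) (w : I -> A -> R) s o a :
  is_dist mu -> (forall s a, is_dist (P s a)) -> (forall s, is_dist (Obs s)) ->
  (forall i a, 0 <= w i a) ->
  0 <= traj_prob (n:=n) mu P Obs info w s o a.
Proof.
move=> hmu hP hO hw; rewrite /traj_prob.
apply: mulr_ge0; first apply: mulr_ge0.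
- exact: (proj1 hmu).
- by apply: prodr_ge0 => t _; apply: (proj1 (hO _)).
- apply: prodr_ge0 => t _; apply: mulr_ge0; first exact: hw.
  exact: (proj1 (hP _ _)).
Qed.

Lemma mass_eq1 (R : realType) (S A O I : finType) (n : nat)
    (mu : S -> R) (P : S -> A -> S -> R) (Obs : S -> O -> R)
    (info : seq (O * A) -> O -> I) (w : I -> A -> R) :
  is_dist mu -> (forall s a, is_dist (P s a)) -> (forall s, is_dist (Obs s)) ->
  (forall i, \sum_(a : A) w i a = 1) ->
  mass n mu P Obs info w = 1.
Proof.
move=> hmu hP hO hw; elim: n => [|n IH]; first exact: mass0.
rewrite mass_step //.
under eq_bigr => s _ do under eq_bigr => o _ do under eq_bigr => a _ do
  rewrite hw mulr1.
exact: IH.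
Qed.

Lemma mass_ge (R : realType) (S A O I : finType) (n : nat)
    (mu : S -> R) (P : S -> A -> S -> R) (Obs : S -> O -> R)
    (info : seq (O * A) -> O -> I) (w : I -> A -> R) (c : R) :
  is_dist mu -> (forall s a, is_dist (P s a)) -> (forall s, is_dist (Obs s)) ->
  (forall i a, 0 <= w i a) -> 0 <= c ->
  (forall i, c <= \sum_(a : A) w i a) ->
  c ^+ n <= mass n mu P Obs info w.
Proof.
move=> hmu hP hO hw0 hc hw; elim: n => [|n IH]; first by rewrite mass0 // expr0.
rewrite mass_step // exprSr.
apply: (@le_trans _ _ (mass n mu P Obs info w * c)).
  by apply: ler_wpM2r.
rewrite /mass !mulr_suml; apply: ler_sum => s _; rewrite mulr_suml.
apply: ler_sum => o _; rewrite mulr_suml; apply: ler_sum => a _.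
apply: ler_wpM2l; first exact: traj_ge0.
exact: hw.
Qed.

Lemma min2 (R : realType) (x y : R) : 2 * Num.min x y = x + y - `|x - y|.
Proof.
case: (lerP x y) => h; lra.
Qed.

Lemma sum_min (R : realType) (Y : finType) (p q : Y -> R) :
  is_dist p -> is_dist q ->
  \sum_(y : Y) Num.min (p y) (q y) = 1 - tv p q.
Proof.
move=> [_ hp] [_ hq].
have h : 2 * \sum_(y : Y) Num.min (p y) (q y) =
   \sum_y p y + \sum_y q y - \sum_y `|p y - q y|.
  rewrite mulr_sumr -big_split -sumrB; apply: eq_bigr => y _; exact: min2.
rewrite /tv; move: h; rewrite hp hq; lra.
Qed.

Lemma tv_ge0 (R : realType) (Y : finType) (p q : Y -> R) : 0 <= tv p q.
Proof.
rewrite /tv; apply: mulr_ge0; first by rewrite invr_ge0 ler0n.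
by apply: sumr_ge0 => y _.
Qed.

Lemma tv_le1 (R : realType) (Y : finType) (p q : Y -> R) :
  is_dist p -> is_dist q -> tv p q <= 1.
Proof.
move=> [p0 hp] [q0 hq].
have h : \sum_(y : Y) `|p y - q y| <= \sum_y p y + \sum_y q y.
  rewrite -big_split; apply: ler_sum => y _.
  apply: (le_trans (ler_normB _ _)).
  by rewrite !ger0_norm.
rewrite /tv; move: h; rewrite hp hq; lra.
Qed.

Lemma ptv_ge0 (R : realType) (I A : finType) (pi1 pi2 : I -> A -> R) :
  0 <= policy_tv pi1 pi2.
Proof.
rewrite /policy_tv; elim/big_ind: _ => //.
- by move=> x y hx hy; case: (lerP x y) => h; lra.
- by move=> i _; apply: tv_ge0.
Qed.

Lemma ptv_le1 (R : realType) (I A : finType) (pi1 pi2 : I -> A -> R) :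
  (forall i, is_dist (pi1 i)) -> (forall i, is_dist (pi2 i)) ->
  policy_tv pi1 pi2 <= 1.
Proof.
move=> h1 h2; rewrite /policy_tv; elim/big_ind: _ => //.
- by move=> x y hx hy; case: (lerP x y) => h; lra.
- by move=> i _; apply: tv_le1.
Qed.

Lemma ptv_ge (R : realType) (I A : finType) (pi1 pi2 : I -> A -> R) (i : I) :
  tv (pi1 i) (pi2 i) <= policy_tv pi1 pi2.
Proof.
rewrite /policy_tv (bigD1 i) //=.
set m := (X in Num.max _ X); case: (lerP (tv (pi1 i) (pi2 i)) m) => h; lra.
Qed.

Lemma bernoulli (R : realType) (d : R) (n : nat) :
  0 <= d -> d <= 1 -> 1 - n%:R * d <= (1 - d) ^+ n.
Proof.
move=> h0 h1; elim: n => [|n IH]; first by rewrite expr0 mul0r subr0.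
rewrite exprS -addn1 natrD.
have h2 : 0 <= 1 - d by lra.
have h3 : (1 - d) * (1 - n%:R * d) <= (1 - d) * (1 - d) ^+ n by apply: ler_wpM2l.
have h4 : 0 <= n%:R * d * d by apply: mulr_ge0 => //; apply: mulr_ge0.
nra.
Qed.

Lemma le_sum1 (R : realType) (Y : finType) (G : Y -> R) (i : Y) :
  (forall j, 0 <= G j) -> G i <= \sum_(j : Y) G j.
Proof.
by move=> h; rewrite (bigD1 i) //= lerDl; apply: sumr_ge0 => j _.
Qed.

Lemma entropy_ge0 (R : realType) (Y : finType) (n : nat) (x : {ffun 'I_n.+1 -> Y}) :
  0 <= entropy (empirical R x).
Proof.
rewrite /entropy oppr_ge0; apply: sumr_le0 => y _.
rewrite /empirical.
have hpos : (0 : R) < n.+1%:R by rewrite ltr0n.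
apply: mulr_ge0_le0.
  by apply: divr_ge0; rewrite ler0n.
apply: ln_le0; rewrite ler_pdivrMr // mul1r ler_nat.
by apply: (leq_trans (max_card _)); rewrite card_ord.
Qed.

Definition S3 (R : realType) (S A O : finType) (n : nat)
  (F : {ffun 'I_n.+1 -> S} -> {ffun 'I_n.+1 -> O} -> {ffun 'I_n -> A} -> R) : R :=
  \sum_(s : {ffun 'I_n.+1 -> S}) \sum_(o : {ffun 'I_n.+1 -> O})
  \sum_(a : {ffun 'I_n -> A}) F s o a.

Lemma S3_le (R : realType) (S A O : finType) (n : nat) F G :
  (forall s o a, F s o a <= G s o a) -> @S3 R S A O n F <= S3 G.
Proof.
move=> h; rewrite /S3; apply: ler_sum => s _; apply: ler_sum => o _.
by apply: ler_sum => a _.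
Qed.

Lemma S3D (R : realType) (S A O : finType) (n : nat) F G :
  @S3 R S A O n (fun s o a => F s o a + G s o a) = S3 F + S3 G.
Proof.
rewrite /S3 -big_split; apply: eq_bigr => s _; rewrite -big_split.
by apply: eq_bigr => o _; rewrite -big_split.
Qed.

Lemma S3B (R : realType) (S A O : finType) (n : nat) F G :
  @S3 R S A O n (fun s o a => F s o a - G s o a) = S3 F - S3 G.
Proof.
rewrite /S3 -sumrB; apply: eq_bigr => s _; rewrite -sumrB.
by apply: eq_bigr => o _; rewrite -sumrB.
Qed.

Lemma S3Mr (R : realType) (S A O : finType) (n : nat) F (c : R) :
  @S3 R S A O n (fun s o a => F s o a * c) = S3 F * c.
Proof.
rewrite /S3 mulr_suml; apply: eq_bigr => s _; rewrite mulr_suml.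
by apply: eq_bigr => o _; rewrite mulr_suml.
Qed.

Lemma traj_le (R : realType) (S A O I : finType) (n : nat)
    (mu : S -> R) (P : S -> A -> S -> R) (Obs : S -> O -> R)
    (info : seq (O * A) -> O -> I) (w v : I -> A -> R) s o a :
  is_dist mu -> (forall s a, is_dist (P s a)) -> (forall s, is_dist (Obs s)) ->
  (forall i a, 0 <= w i a) -> (forall i a, w i a <= v i a) ->
  traj_prob (n:=n) mu P Obs info w s o a <= traj_prob mu P Obs info v s o a.
Proof.
move=> hmu hP hO hw hwv; rewrite /traj_prob.
apply: ler_wpM2l.
  apply: mulr_ge0; first exact: (proj1 hmu).
  by apply: prodr_ge0 => t _; apply: (proj1 (hO _)).
apply: ler_prod => t _; apply/andP; split.
  by apply: mulr_ge0; [exact: hw | exact: (proj1 (hP _ _))].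
by apply: ler_wpM2r; [exact: (proj1 (hP _ _)) | exact: hwv].
Qed.

Lemma sandwich (R : realType) (S A O I : finType) (n : nat)
    (mu : S -> R) (P : S -> A -> S -> R) (Obs : S -> O -> R)
    (info : seq (O * A) -> O -> I) (pi q : I -> A -> R)
    (f : {ffun 'I_n.+1 -> S} -> {ffun 'I_n.+1 -> O} -> R) (M : R) :
  is_dist mu -> (forall s a, is_dist (P s a)) -> (forall s, is_dist (Obs s)) ->
  (forall i, is_dist (pi i)) ->
  (forall i a, 0 <= q i a) -> (forall i a, q i a <= pi i a) ->
  (forall s o, 0 <= f s o) ->
  (forall s o a, 0 < traj_prob mu P Obs info pi s o a -> f s o <= M) ->
  S3 (fun s o a => traj_prob mu P Obs info q s o a * f s o) <=
  S3 (fun s o a => traj_prob mu P Obs info pi s o a * f s o) <=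
  S3 (fun s o a => traj_prob mu P Obs info q s o a * f s o) +
    M * (1 - mass n mu P Obs info q).
Proof.
move=> hmu hP hO hpi hq0 hqp hf hM.
have hpi0 : forall i a, 0 <= pi i a by move=> i a; exact: (proj1 (hpi i)).
apply/andP; split.
  apply: S3_le => s o a; apply: ler_wpM2r => //.
  exact: traj_le.
have hm1 : mass n mu P Obs info pi = 1.
  by apply: mass_eq1 => // i; exact: (proj2 (hpi i)).
have -> : M * (1 - mass n mu P Obs info q) =
   S3 (fun (s : {ffun 'I_n.+1 -> S}) o a => (traj_prob mu P Obs info pi s o a -
                     traj_prob mu P Obs info q s o a) * M).
  by rewrite S3Mr S3B -hm1 mulrC.
rewrite -S3D; apply: S3_le => s o a.
have h1 : traj_prob mu P Obs info q s o a <= traj_prob mu P Obs info pi s o a.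
  exact: traj_le.
have h2 : 0 <= traj_prob mu P Obs info q s o a by apply: traj_ge0.
have h3 := hf s o.
case: (lerP (traj_prob mu P Obs info pi s o a) 0) => hp.
  have e1 : traj_prob mu P Obs info pi s o a = 0 by lra.
  have e2 : traj_prob mu P Obs info q s o a = 0 by lra.
  rewrite e1 e2; lra.
have h4 := hM s o a hp.
set tp := traj_prob mu P Obs info pi s o a in h1 hp h4 *.
set tq := traj_prob mu P Obs info q s o a in h1 h2 *.
have h5 : 0 <= (tp - tq) * (M - f s o) by apply: mulr_ge0; lra.
nra.
Qed.

Lemma main_bound (R : realType) (S A O I : finType) (n : nat)
    (mu : S -> R) (P : S -> A -> S -> R) (Obs : S -> O -> R)
    (info : seq (O * A) -> O -> I) (pi1 pi2 : I -> A -> R)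
    (f : {ffun 'I_n.+1 -> S} -> {ffun 'I_n.+1 -> O} -> R) (M : R) :
  is_dist mu -> (forall s a, is_dist (P s a)) -> (forall s, is_dist (Obs s)) ->
  (forall i, is_dist (pi1 i)) -> (forall i, is_dist (pi2 i)) ->
  (forall s o, 0 <= f s o) -> 0 <= M ->
  (forall s o a, 0 < traj_prob mu P Obs info pi1 s o a \/
                 0 < traj_prob mu P Obs info pi2 s o a -> f s o <= M) ->
  `|S3 (fun s o a => traj_prob mu P Obs info pi1 s o a * f s o) -
    S3 (fun s o a => traj_prob mu P Obs info pi2 s o a * f s o)|
   <= n.+1%:R * M * policy_tv pi1 pi2.
Proof.
move=> hmu hP hO h1 h2 hf hM0 hM.
set q := fun i a => Num.min (pi1 i a) (pi2 i a).
set d := policy_tv pi1 pi2.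
have hq0 : forall i a, 0 <= q i a.
  move=> i a; rewrite /q; have := proj1 (h1 i) a; have := proj1 (h2 i) a.
  by case: (lerP (pi1 i a) (pi2 i a)) => _ hb ha; lra.
have hq1 : forall i a, q i a <= pi1 i a.
  by move=> i a; rewrite /q; case: (lerP (pi1 i a) (pi2 i a)) => h //; apply: ltW.
have hq2 : forall i a, q i a <= pi2 i a.
  by move=> i a; rewrite /q; case: (lerP (pi1 i a) (pi2 i a)).
have hd0 : 0 <= d by apply: ptv_ge0.
have hd1 : d <= 1 by apply: ptv_le1.
have hqs : forall i, 1 - d <= \sum_(a : A) q i a.
  move=> i; rewrite /q sum_min //; have := ptv_ge pi1 pi2 i; rewrite -/d; lra.
have hmq : 1 - n%:R * d <= mass n mu P Obs info q.
  apply: (le_trans (bernoulli n hd0 hd1)); apply: mass_ge => //; lra.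
have s1 := sandwich hmu hP hO h1 hq0 hq1 hf (fun s o a h => hM s o a (or_introl h)).
have s2 := sandwich hmu hP hO h2 hq0 hq2 hf (fun s o a h => hM s o a (or_intror h)).
case/andP: s1 => s1 s1'; case/andP: s2 => s2 s2'.
set K := M * (1 - mass n mu P Obs info q) in s1' s2'.
have hK : K <= n.+1%:R * M * d.
  rewrite /K; apply: (@le_trans _ _ (M * (n.+1%:R * d))).
    apply: ler_wpM2l => //.
    have : n%:R * d <= n.+1%:R * d.
      by apply: ler_wpM2r => //; rewrite ler_nat.
    lra.
  by rewrite mulrCA mulrA.
rewrite ler_norml; apply/andP; split; lra.
Qed.

Lemma traj_le_smarg (R : realType) (S A O I : finType) (n : nat)
    (mu : S -> R) (P : S -> A -> S -> R) (Obs : S -> O -> R)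
    (info : seq (O * A) -> O -> I) (pi : I -> A -> R) s o a :
  is_dist mu -> (forall s a, is_dist (P s a)) -> (forall s, is_dist (Obs s)) ->
  (forall i, is_dist (pi i)) ->
  traj_prob (n:=n) mu P Obs info pi s o a <= state_marg mu P Obs info pi s /\
  traj_prob (n:=n) mu P Obs info pi s o a <= obs_marg mu P Obs info pi o.
Proof.
move=> hmu hP hO hpi.
have h0 : forall s o a, 0 <= traj_prob (n:=n) mu P Obs info pi s o a.
  by move=> *; apply: traj_ge0 => // i b; exact: (proj1 (hpi i)).
split.
  rewrite /state_marg.
  apply: (le_trans (le_sum1 (G := fun b => traj_prob mu P Obs info pi s o b) a (h0 s o))).
  apply: (le_sum1 (G := fun o' => \sum_b traj_prob mu P Obs info pi s o' b) o).
  by move=> j; apply: sumr_ge0.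
rewrite /obs_marg.
apply: (le_trans (le_sum1 (G := fun b => traj_prob mu P Obs info pi s o b) a (fun b => h0 s o b))).
apply: (le_sum1 (G := fun s' => \sum_b traj_prob mu P Obs info pi s' o b) s).
by move=> j; apply: sumr_ge0.
Qed.

Theorem theorem2 (R : realType) (S A O I : finType) (n : nat)
    (mu : S -> R) (P : S -> A -> S -> R) (Obs : S -> O -> R)
    (info : seq (O * A) -> O -> I) (pi1 pi2 : I -> A -> R) :
  is_dist mu ->
  (forall s a, is_dist (P s a)) ->
  (forall s, is_dist (Obs s)) ->
  (forall i, is_dist (pi1 i)) ->
  (forall i, is_dist (pi2 i)) ->
  (* j = S *)
  (forall tau_star : {ffun 'I_n.+1 -> S},
     (0 < state_marg mu P Obs info pi1 tau_star \/
      0 < state_marg mu P Obs info pi2 tau_star) ->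
     (forall tau : {ffun 'I_n.+1 -> S},
        (0 < state_marg mu P Obs info pi1 tau \/
         0 < state_marg mu P Obs info pi2 tau) ->
        entropy (empirical R tau) <= entropy (empirical R tau_star)) ->
     `|J_state n mu P Obs info pi1 - J_state n mu P Obs info pi2|
       <= n.+1%:R * entropy (empirical R tau_star) * policy_tv pi1 pi2)
  /\
  (* j = O *)
  (forall tau_star : {ffun 'I_n.+1 -> O},
     (0 < obs_marg mu P Obs info pi1 tau_star \/
      0 < obs_marg mu P Obs info pi2 tau_star) ->
     (forall tau : {ffun 'I_n.+1 -> O},
        (0 < obs_marg mu P Obs info pi1 tau \/
         0 < obs_marg mu P Obs info pi2 tau) ->
        entropy (empirical R tau) <= entropy (empirical R tau_star)) ->
     `|J_obs n mu P Obs info pi1 - J_obs n mu P Obs info pi2|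
       <= n.+1%:R * entropy (empirical R tau_star) * policy_tv pi1 pi2).
Proof.
move=> hmu hP hO h1 h2; split.
- move=> ts _ hmax.
  apply: (main_bound (f := fun s o => entropy (empirical R s))) => //.
  + by move=> s o; apply: entropy_ge0.
  + exact: entropy_ge0.
  + move=> s o a [hp|hp]; apply: hmax.
      left; apply: (lt_le_trans hp); exact: (proj1 (traj_le_smarg info s o a hmu hP hO h1)).
    right; apply: (lt_le_trans hp); exact: (proj1 (traj_le_smarg info s o a hmu hP hO h2)).
- move=> ts _ hmax.
  apply: (main_bound (f := fun s o => entropy (empirical R o))) => //.
  + by move=> s o; apply: entropy_ge0.
  + exact: entropy_ge0.
  + move=> s o a [hp|hp]; apply: hmax.
      left; apply: (lt_le_trans hp); exact: (proj2 (traj_le_smarg info s o a hmu hP hO h1)).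
    right; apply: (lt_le_trans hp); exact: (proj2 (traj_le_smarg info s o a hmu hP hO h2)).
Qed.
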